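(* Let $T$ be a singular weighted tree with adjacency matrix $A$. Then $A$ and $A^{\#}$ have the same zero–nonzero pattern if and only if $T$ is a weighted star.
   Context: A weighted tree has a nonzero real weight on each edge; its adjacency matrix $A$ has $(i,j)$ entry equal to the weight of edge $v_iv_j$, or $0$ if no edge; $T$ is singular if $A$ is singular. $A^{\#}$ is the group inverse of $A$, the unique $X$ with $AXA=A$, $XAX=X$, $AX=XA$. *)

(* Defs.v *)
From mathcomp Require Import all_boot all_order all_algebra.
From mathcomp Require Import reals.
Set Implicit Arguments. Unset Strict Implicit. Unset Printing Implicit Defensive.
Import Order.TTheory GRing.Theory Num.Theory.
Local Open Scope ring_scope.

(* Vertices of a graph on n vertices are 'I_n.  A weighted graph is given by
   its (real) adjacency matrix A: A i j is the weight of edge v_i v_j, or 0 if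
   there is no edge. *)

Definition adjrel (R : realType) (n : nat) (A : 'M[R]_n) : rel 'I_n :=
  fun i j => A i j != 0.

Definition acyclic (n : nat) (e : rel 'I_n) : Prop :=
  forall c : seq 'I_n, uniq c -> (2 < size c)%N -> ~~ cycle e c.

Definition connected (n : nat) (e : rel 'I_n) : Prop :=
  forall i j : 'I_n, connect e i j.

Definition weighted_tree_adj (R : realType) (n : nat) (A : 'M[R]_n) : Prop :=
  [/\ A^T = A, (forall i, A i i = 0),
      connected (adjrel A) & acyclic (adjrel A)].

Definition is_star (R : realType) (n : nat) (A : 'M[R]_n) : Prop :=
  exists c : 'I_n, forall i j, A i j != 0 -> (i == c) || (j == c).

Definition singular_mx (R : realType) (n : nat) (A : 'M[R]_n) : Prop :=
  \det A = 0.

Definition group_inverse (R : realType) (n : nat) (A X : 'M[R]_n) : Prop :=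
  [/\ A *m X *m A = A, X *m A *m X = X & A *m X = X *m A].

Definition same_pattern (R : realType) (n : nat) (A B : 'M[R]_n) : Prop :=
  forall i j, (A i j == 0) = (B i j == 0).

(* Main.v *)
Require Import Defs.
From mathcomp Require Import all_boot all_order all_algebra.
From mathcomp Require Import reals.
Set Implicit Arguments. Unset Strict Implicit. Unset Printing Implicit Defensive.
Import Order.TTheory GRing.Theory Num.Theory.
Local Open Scope ring_scope.

Section Tree.
Variables (R : realType) (n : nat) (A : 'M[R]_n).
Hypothesis sym : A^T = A.
Hypothesis diag0 : forall i, A i i = 0.
Hypothesis acyc : acyclic (adjrel A).
Local Notation E := (adjrel A).

Lemma Esym i j : E i j = E j i.
Proof. by rewrite /adjrel -{1}sym mxE. Qed.

Lemma Eneq i j : E i j -> i != j.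
Proof. by apply: contraTneq => ->; rewrite /adjrel diag0 eqxx. Qed.

Lemma Eneq2 i j : E i j -> j != i.
Proof. by rewrite eq_sym; apply: Eneq. Qed.

Lemma cyc3 x y z : E x y -> E y z -> E z x -> False.
Proof.
move=> e1 e2 e3; have := acyc (c:=[:: x; y; z]).
rewrite /= !inE e1 e2 e3 (negbTE (Eneq e1)) (negbTE (Eneq e2)) (negbTE (Eneq2 e3)) /=.
by move=> /(_ isT isT).
Qed.

Lemma cyc4 x y z w : E x y -> E y z -> E z w -> E w x -> x != z -> y != w -> False.
Proof.
move=> e1 e2 e3 e4 n1 n2; have := acyc (c:=[:: x; y; z; w]).
rewrite /= !inE e1 e2 e3 e4 (negbTE (Eneq e1)) (negbTE (Eneq e2)) (negbTE (Eneq e3)) (negbTE (Eneq2 e4)) (negbTE n1) (negbTE n2) /=.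
by move=> /(_ isT isT).
Qed.

Lemma cyc6 x1 x2 x3 x4 x5 x6 : E x1 x2 -> E x2 x3 -> E x3 x4 -> E x4 x5 -> E x5 x6 -> E x6 x1 ->
  x1 != x3 -> x1 != x4 -> x1 != x5 -> x2 != x4 -> x2 != x5 -> x2 != x6 ->
  x3 != x5 -> x3 != x6 -> x4 != x6 -> False.
Proof.
move=> e1 e2 e3 e4 e5 e6 n13 n14 n15 n24 n25 n26 n35 n36 n46.
have := acyc (c:=[:: x1; x2; x3; x4; x5; x6]).
rewrite /= !inE e1 e2 e3 e4 e5 e6 (negbTE (Eneq e1)) (negbTE (Eneq e2)) (negbTE (Eneq e3)) (negbTE (Eneq e4)) (negbTE (Eneq e5)) (negbTE (Eneq2 e6)).
rewrite (negbTE n13) (negbTE n14) (negbTE n15) (negbTE n24) (negbTE n25) (negbTE n26) (negbTE n35) (negbTE n36) (negbTE n46) /=.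
by move=> /(_ isT isT).
Qed.


Lemma E_of (a b : 'I_n) : A a b != 0 -> E a b. Proof. by []. Qed.

Lemma walk3 (X : 'M[R]_n) (pat : forall a b, (A a b == 0) = (X a b == 0))
  i k l j : E i k -> E k l -> E l j -> i != l -> k != j -> i != j -> ~~ E i j ->
  forall a b, A i a != 0 -> X a b != 0 -> A b j != 0 -> a = k /\ b = l.
Proof.
move=> eik ekl elj nil nkj nij neij a b eia; rewrite -pat => eab ebj.
move: (E_of eia) (E_of eab) (E_of ebj) => {}eia {}eab {}ebj.
case: (eqVneq a k) => [eak | nak]; case: (eqVneq b l) => [ebl | nbl] //.
- subst a; exfalso; apply: (cyc4 (x:=k) (y:=l) (z:=j) (w:=b)) => //.
  + by rewrite Esym.
  + by rewrite Esym.
  + by rewrite eq_sym.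
- subst b; exfalso; apply: (cyc4 (x:=i) (y:=k) (z:=l) (w:=a)) => //.
  + by rewrite Esym.
  + by rewrite Esym.
  + by rewrite eq_sym.
exfalso.
case: (eqVneq a l) => [eal | nal].
  by subst a; apply: (cyc3 (x:=i) (y:=k) (z:=l)) => //; rewrite Esym.
case: (eqVneq b k) => [ebk | nbk].
  by subst b; apply: (cyc3 (x:=k) (y:=l) (z:=j)) => //; rewrite Esym.
case: (eqVneq a j) => [eaj | naj]; first by subst a; rewrite eia in neij.
case: (eqVneq b i) => [ebi | nbi]; first by subst b; rewrite ebj in neij.
apply: (cyc6 (x1:=i) (x2:=k) (x3:=l) (x4:=j) (x5:=b) (x6:=a)) => //;
  try by rewrite Esym.
all: by rewrite eq_sym.
Qed.

Lemma noP3 (X : 'M[R]_n) (pat : forall a b, (A a b == 0) = (X a b == 0))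
  (hX : A *m X *m A = A)
  i k l j : E i k -> E k l -> E l j -> i != l -> k != j -> i != j -> ~~ E i j -> False.
Proof.
move=> eik ekl elj nil nkj nij neij.
have W := walk3 pat eik ekl elj nil nkj nij neij.
have zero : A i j = 0 by apply/eqP; move: neij; rewrite /adjrel negbK.
move/matrixP: hX => /(_ i j); rewrite zero mxE.
have h1 : forall b, b != l -> (A *m X) i b * A b j = 0.
  move=> b nbl; rewrite mxE mulr_suml; apply: big1 => a _.
  have [->|ha] := eqVneq (A i a) 0; first by rewrite !mul0r.
  have [->|hx] := eqVneq (X a b) 0; first by rewrite mulr0 mul0r.
  have [->|hb] := eqVneq (A b j) 0; first by rewrite mulr0.
  by case: (W a b ha hx hb) => _ ebl; rewrite ebl eqxx in nbl.
have h2 : forall a, a != k -> A i a * X a l = 0.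
  move=> a nak.
  have [->|ha] := eqVneq (A i a) 0; first by rewrite !mul0r.
  have [->|hx] := eqVneq (X a l) 0; first by rewrite mulr0.
  by case: (W a l ha hx) => // eak _; rewrite eak eqxx in nak.
rewrite (bigD1 l) //= big1 // addr0 mxE (bigD1 k) //= big1 // addr0.
move/eqP; rewrite !mulf_eq0 -pat; apply/negP.
by rewrite !negb_or; move: eik ekl elj; rewrite /adjrel => -> -> ->.
Qed.


Hypothesis conn : connected E.

Definition NP3 := forall i k l j, E i k -> E k l -> E l j -> i != l -> k != j ->
  i != j -> ~~ E i j -> False.

Lemma star_of_leaf k l : E k l -> (forall x, E l x -> x == k) -> NP3 -> is_star A.
Proof.
move=> ekl leaf np; exists k.
have cl : forall x y, E k x -> E x y -> y == k.
  move=> x y ekx exy; apply/negPn/negP => nyk.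
  have nxl : x != l.
    by apply/eqP => exl; subst x; rewrite (leaf y exy) in nyk.
  have nyl : y != l.
    apply/eqP => eyl; subst y.
    have /eqP exk : x == k by apply: leaf; rewrite Esym.
    by move: ekx; rewrite exk /adjrel diag0 eqxx.
  have neyl : ~~ E y l.
    apply/negP => eyl; have : y == k by apply: leaf; rewrite Esym.
    by rewrite (negbTE nyk).
  by apply: (np y x k l) => //; rewrite Esym.
pose S := [pred v | (v == k) || E k v].
have stepS : forall x y, E x y -> S x -> S y.
  move=> x y exy; rewrite !inE /=; case/orP => [/eqP exk | ekx].
    by subst x; rewrite exy orbT.
  by rewrite (cl x y ekx exy).
have clS : closed E S.
  move=> x y exy; apply/idP/idP; first exact: stepS.
  by apply: stepS; rewrite Esym.
have inS : forall v, S v.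
  move=> v; have := closed_connect clS (conn k v).
  by rewrite !inE /= eqxx => <-.
move=> i j eij; apply/negPn/negP; rewrite negb_or => /andP[nik njk].
have := inS i; rewrite inE /= (negbTE nik) /= => eki.
have := inS j; rewrite inE /= (negbTE njk) /= => ekj.
by apply: (cyc3 (x:=k) (y:=i) (z:=j)) => //; rewrite Esym.
Qed.

Lemma star_of_NP3 (v0 : 'I_n) : NP3 -> is_star A.
Proof.
move=> np.
case: (pickP (fun p : 'I_n * 'I_n => E p.1 p.2)) => [[k l] /= ekl | none]; last first.
  by exists v0 => i j eij; move: (none (i, j)); rewrite /= /adjrel eij.
case: (pickP (fun x => E k x && (x != l))) => [i /andP[eki nil] | H1]; last first.
  apply: (star_of_leaf (k:=l) (l:=k)) => //; first by rewrite Esym.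
  by move=> x ekx; move: (H1 x); rewrite /= ekx /= => /negbFE.
case: (pickP (fun x => E l x && (x != k))) => [j /andP[elj njk] | H2]; last first.
  apply: (star_of_leaf (k:=k) (l:=l)) => //.
  by move=> x elx; move: (H2 x); rewrite /= elx /= => /negbFE.
exfalso; apply: (np i k l j) => //.
- by rewrite Esym.
- by rewrite eq_sym.
- apply/eqP => eij; subst j.
  by apply: (cyc3 (x:=k) (y:=l) (z:=i)) => //; rewrite Esym.
- apply/negP => eij.
  apply: (cyc4 (x:=i) (y:=k) (z:=l) (w:=j)) => //; first by rewrite Esym.
  + by rewrite Esym.
  + by rewrite eq_sym.
Qed.

End Tree.

Section Star.
Variables (R : realType) (n : nat) (A : 'M[R]_n).

Lemma mid m1 m2 m3 m4 m5 (P : 'M[R]_(m1, m2)) (Q : 'M[R]_(m2, m3)) (M : 'M[R]_(m3, m4))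
  (N : 'M[R]_(m4, m5)) : P *m Q *m (M *m N) = P *m (Q *m M) *m N.
Proof. by rewrite !mulmxA. Qed.

Lemma ginv_unique X Y : group_inverse A X -> group_inverse A Y -> X = Y.
Proof.
case=> [x1 x2 x3] [y1 y2 y3].
have e1 : A *m X = A *m X *m (A *m Y).
  rewrite {1}x3 -{1}y1 !mulmxA x3 -!mulmxA y3 //.
have e2 : A *m Y = A *m X *m (A *m Y).
  by rewrite -{1}x1 !mulmxA.
have EF : A *m X = A *m Y by rewrite e1 -e2.
rewrite -x2 -y2 -x3 EF y3 -!mulmxA.
by rewrite EF.
Qed.

Lemma cube0 X : group_inverse A X -> A *m A *m A = 0 -> A = 0.
Proof.
case=> [x1 x2 x3] h.
have h1 : A = A *m A *m X by rewrite -{1}x1 -mulmxA -x3 mulmxA.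
have h2 : A *m (A *m A *m X) *m X = A by rewrite -h1 -h1.
by rewrite -h2 !mulmxA h !mul0mx.
Qed.


Hypothesis sym : A^T = A.
Hypothesis diag0 : forall i, A i i = 0.

Lemma star_cube c : (forall i j, A i j != 0 -> (i == c) || (j == c)) ->
  exists s, A *m A *m A = s *: A.
Proof.
move=> hc.
pose e : 'rV[R]_n := delta_mx 0 c.
pose w : 'rV[R]_n := row c A.
have hA : A = e^T *m w + w^T *m e.
  apply/matrixP => i j; rewrite !mxE !big_ord1 !mxE /=.
  have [->|nic] := eqVneq i c.
    by rewrite mul1r diag0 mul0r addr0.
  rewrite mul0r add0r.
  have [->|njc] := eqVneq j c; first by rewrite mulr1 -{1}sym mxE.
  rewrite mulr0; apply/eqP; apply/negPn/negP => /hc.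
  by rewrite (negbTE nic) (negbTE njc).
have f1 : w *m e^T = 0.
  by rewrite trmx_delta -colE; apply/matrixP => a b; rewrite !mxE diag0.
have f2 : e *m w^T = 0.
  by rewrite -[e *m w^T]trmxK trmx_mul trmxK f1 trmx0.
have f3 : e *m e^T = 1%:M.
  by rewrite trmx_delta mul_delta_mx; apply/matrixP => a b; rewrite !ord1 !mxE.
pose s := (w *m w^T) 0 0.
have f4 : w *m w^T = s%:M by apply: mx11_scalar.
exists s.
have A2 : A *m A = s *: (e^T *m e) + w^T *m w.
  rewrite hA mulmxDl !mulmxDr !mid f1 f2 f3 f4.
  by rewrite mulmx0 mul0mx mulmx1 mul_mx_scalar -scalemxAl !mulmx0 !mul0mx add0r addr0.
rewrite A2 [in LHS]hA mulmxDl !mulmxDr -!scalemxAl !mid f1 f2 f3 f4.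
rewrite !mulmx0 !mul0mx mulmx1 mul_mx_scalar scalemxAl scaler0 addr0 add0r.
by rewrite [in RHS]hA scalerDr !scalemxAl.
Qed.


Lemma star_pattern X : group_inverse A X -> is_star A -> same_pattern A X.
Proof.
move=> gX [c hc]; have [s hs] := star_cube hc.
have [s0 | sn0] := eqVneq s 0.
  have A0 : A = 0 by apply: (cube0 gX); rewrite hs s0 scale0r.
  have X0 : X = 0.
    by case: gX => _ x2 _; rewrite -x2 A0 mulmx0 mul0mx.
  by move=> i j; rewrite A0 X0 !mxE.
have gY : group_inverse A (s^-1 *: A).
  split.
  - by rewrite -scalemxAr -scalemxAl hs scalerA mulVf // scale1r.
  - rewrite -!scalemxAl -!scalemxAr hs !scalerA.
    by rewrite -mulrA mulVf // mulr1.
  - by rewrite -scalemxAr -scalemxAl.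
rewrite (ginv_unique gX gY) => i j.
by rewrite mxE mulf_eq0 invr_eq0 (negbTE sn0).
Qed.

End Star.

Unset Implicit Arguments.

Theorem corollary2p13 (R : realType) (n : nat) (A Ag : 'M[R]_n) :
  weighted_tree_adj A -> singular_mx A -> group_inverse A Ag ->
  (same_pattern A Ag <-> is_star A).
Proof.
case=> sym diag0 conn acyc sing gA; split; last exact: star_pattern.
move=> pat.
case: n A Ag sym diag0 conn acyc sing gA pat => [|n'] A Ag sym diag0 conn acyc sing gA pat.
  by move: sing; rewrite /singular_mx det_mx00 => /eqP; rewrite oner_eq0.
apply: (star_of_NP3 sym diag0 acyc conn ord0).
move=> i k l j; apply: (noP3 sym diag0 acyc pat).
by case: gA.
Qed.
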